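(* Suppose $\mathbf{U}\in\mathbb{R}^{N\times n}$ is the matrix of the first $n$ left singular vectors of a data matrix $\mathbf{X}\in\mathbb{R}^{N\times n_s}$, and $\boldsymbol{\Sigma}\in\mathbb{R}^{n\times n}$ is the corresponding diagonal matrix of (nonzero) singular values $\{\sigma_j\}_{j=1}^n$. Let $\hat{\mathbf{X}}=\mathbf{U}^\intercal\mathbf{X}\in\mathbb{R}^{n\times n_s}$ and $\hat{\mathbf{X}}_t=\mathbf{U}^\intercal\mathbf{X}_t\in\mathbb{R}^{n\times n_s}$, where $\mathbf{X}_t$ is an approximation (e.g. by finite differences) to the time derivative of the snapshots in $\mathbf{X}$. Then the unique solution to the operator inference problem of size $n$ is given by \[ \hat{\mathbf{D}} = \operatorname*{argmin}_{\mathbf{D}\in\mathbb{R}^{n\times n}}\left\|\hat{\mathbf{X}}_t - \mathbf{D}\hat{\mathbf{X}}\right\|^2 = \hat{\mathbf{X}}_t\hat{\mathbf{X}}^\intercal\boldsymbol{\Sigma}^{-2}.\] Moreover, for any $n'<n$, the submatrix $\hat{\mathbf{D}}'\in\mathbb{R}^{n'\times n'}$ formed by extracting the first $n'$ rows and columns of $\hat{\mathbf{D}}$ is the solution to the corresponding operator inference problem of size $n'$ (i.e. the same problem with $\mathbf{U}$ replaced by its first $n'$ columns).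
   Context: Operator inference (OpInf) learns a reduced linear operator $\hat{\mathbf{D}}$ for a reduced model $\dot{\hat{\mathbf{x}}}=\hat{\mathbf{D}}\hat{\mathbf{x}}$ from projected snapshot data by least squares; the norm is the Frobenius norm. *)

(* Defs.v *)
From HB Require Import structures.
From mathcomp Require Import all_boot all_order all_algebra.
Set Implicit Arguments. Unset Strict Implicit. Unset Printing Implicit Defensive.
Import Order.TTheory GRing.Theory Num.Theory.
Local Open Scope ring_scope.

Definition frob2 (R : realFieldType) (m k : nat) (M : 'M[R]_(m, k)) : R :=
  \sum_(i < m) \sum_(j < k) (M i j) ^+ 2.

Definition is_svd (R : realFieldType) (N ns : nat) (X : 'M[R]_(N, ns))
    (W : 'M[R]_N) (s : nat -> R) (V : 'M[R]_ns) : Prop :=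
  [/\ W^T *m W = 1%:M /\ W *m W^T = 1%:M,
      V^T *m V = 1%:M /\ V *m V^T = 1%:M,
      (forall k, (k < minn N ns)%N -> 0 <= s k),
      (forall k l, (k <= l)%N -> (l < minn N ns)%N -> s l <= s k) &
      X = W *m (\matrix_(i < N, j < ns) (if (i == j :> nat) then s i else 0))
            *m V^T].

Definition opinf_obj (R : realFieldType) (N ns k : nat) (U : 'M[R]_(N, k))
    (X Xt : 'M[R]_(N, ns)) (D : 'M[R]_k) : R :=
  frob2 (U^T *m Xt - D *m (U^T *m X)).

Definition opinf_min (R : realFieldType) (N ns k : nat) (U : 'M[R]_(N, k))
    (X Xt : 'M[R]_(N, ns)) (D : 'M[R]_k) : Prop :=
  forall D' : 'M[R]_k, opinf_obj U X Xt D <= opinf_obj U X Xt D'.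

Definition opinf_unique_solution (R : realFieldType) (N ns k : nat)
    (U : 'M[R]_(N, k)) (X Xt : 'M[R]_(N, ns)) (D : 'M[R]_k) : Prop :=
  opinf_min U X Xt D /\ (forall D', opinf_min U X Xt D' -> D' = D).

(* Main.v *)
Require Import Defs.
From HB Require Import structures.
From mathcomp Require Import all_boot all_order all_algebra.
Import Order.TTheory GRing.Theory Num.Theory.
Local Open Scope ring_scope.

Lemma frob2_tr (R : realFieldType) m k (M : 'M[R]_(m,k)) : frob2 M = \tr (M *m M^T).
Proof.
rewrite /frob2 /mxtrace; apply: eq_bigr => i _; rewrite !mxE.
by apply: eq_bigr => j _; rewrite !mxE expr2.
Qed.

Lemma frob2_ge0 (R : realFieldType) m k (M : 'M[R]_(m,k)) : 0 <= frob2 M.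
Proof. by apply: sumr_ge0 => i _; apply: sumr_ge0 => j _; apply: sqr_ge0. Qed.

Lemma frob2_eq0 (R : realFieldType) m k (M : 'M[R]_(m,k)) : frob2 M = 0 -> M = 0.
Proof.
move=> h; apply/matrixP => i j; rewrite mxE.
have /psumr_eq0P h1 := h.
have h2 := h1 (fun i _ => sumr_ge0 _ (fun j _ => sqr_ge0 (M i j))) i isT.
have /psumr_eq0P h3 := h2.
have := h3 (fun j _ => sqr_ge0 (M i j)) j isT.
by move/eqP; rewrite sqrf_eq0 => /eqP.
Qed.

Lemma ls_decomp (R : realFieldType) k m (A B : 'M[R]_(k,m)) (G : 'M[R]_k) :
  B *m B^T = G -> G \in unitmx ->
  forall D, frob2 (A - D *m B) = frob2 (A - A *m B^T *m invmx G *m B)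
     + frob2 ((D - A *m B^T *m invmx G) *m B).
Proof.
move=> hG hU D; set D0 := A *m B^T *m invmx G.
have hP : (A - D0 *m B) *m B^T = 0.
  by rewrite mulmxBl -mulmxA hG /D0 mulmxKV // subrr.
have -> : A - D *m B = (A - D0 *m B) - (D - D0) *m B.
  by rewrite [(D - D0) *m B]mulmxBl opprB addrA subrK.
rewrite !frob2_tr; set P := A - D0 *m B; set Q := (D - D0) *m B.
have hPQ : P *m Q^T = 0 by rewrite /Q trmx_mul mulmxA hP mul0mx.
have hQP : Q *m P^T = 0 by rewrite -[Q *m P^T]trmxK trmx_mul trmxK hPQ trmx0.
rewrite raddfB /= mulmxBl !mulmxBr hPQ hQP subr0 sub0r opprK.
by rewrite raddfD.
Qed.

Lemma ls_unique (R : realFieldType) k m (A B : 'M[R]_(k,m)) (G : 'M[R]_k) :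
  B *m B^T = G -> G \in unitmx ->
  let D0 := A *m B^T *m invmx G in
  (forall D, frob2 (A - D0 *m B) <= frob2 (A - D *m B)) /\
  (forall D', (forall D, frob2 (A - D' *m B) <= frob2 (A - D *m B)) -> D' = D0).
Proof.
move=> hG hU D0; split.
  by move=> D; rewrite (@ls_decomp _ _ _ A _ _ hG hU D) lerDl frob2_ge0.
move=> D' h; have := h D0; rewrite (@ls_decomp _ _ _ A _ _ hG hU D') gerDl => hle.
have h0 : frob2 ((D' - D0) *m B) = 0 by apply/le_anti; rewrite hle frob2_ge0.
have hq := @frob2_eq0 _ _ _ _ h0.
apply/eqP; rewrite -subr_eq0; apply/eqP.
by rewrite -(mulmxK hU (D' - D0)) -hG mulmxA hq !mul0mx.
Qed.
Lemma gram (R : realFieldType) N ns k (X : 'M[R]_(N,ns)) W s V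
  (f : 'I_k -> 'I_N) (hf : forall i, val (f i) = val i) (hk : (k <= ns)%N) :
  is_svd X W s V ->
  ((colsub f W)^T *m X) *m ((colsub f W)^T *m X)^T =
   diag_mx (\row_(j < k) s j) *m diag_mx (\row_(j < k) s j).
Proof.
case=> [[hW1 _] [hV1 _] _ _ ->].
set S := \matrix_(i < N, j < ns) _.
have -> : (colsub f W)^T *m (W *m S *m V^T) = rowsub f S *m V^T.
  rewrite trmx_mxsub !mulmxA mul_rowsub_mx hW1 mul_rowsub_mx mul1mx. by rewrite mul_rowsub_mx.
rewrite trmx_mul trmxK mulmxA -[_ *m V^T *m V]mulmxA hV1 mulmx1 mulmx_diag.
apply/matrixP => i j; rewrite !mxE.
have hi : (i < ns)%N by apply: leq_trans (ltn_ord i) hk.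
rewrite (bigD1 (Ordinal hi)) //= big1 ?addr0.
  rewrite !mxE /= !hf eqxx.
  case: (eqVneq i j) => [->|hij]; first by rewrite eqxx mulr1n.
  have : (val j == val i) = false by apply/negbTE; rewrite eq_sym; apply: contra hij => /eqP/val_inj ->.
  by move=> ->; rewrite mulr0 mulr0n.
move=> l hl; rewrite !mxE !hf.
have : (val i == val l) = false.
  by apply/negbTE; apply: contra hl => /eqP h; apply/eqP/val_inj.
by move=> ->; rewrite mul0r.
Qed.

Lemma sig_unit (R : realFieldType) k (s : nat -> R) :
  (forall j, (j < k)%N -> s j != 0) ->
  diag_mx (\row_(j < k) s j) *m diag_mx (\row_(j < k) s j) \in unitmx.
Proof.
move=> hs; rewrite unitmx_mul andbb unitmxE det_diag unitfE.
by apply/prodf_neq0 => i _; rewrite mxE hs.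
Qed.

Lemma dform (R : realFieldType) k m (A B : 'M[R]_(k,m)) (s : nat -> R) :
  (forall j, (j < k)%N -> s j != 0) ->
  A *m B^T *m invmx (diag_mx (\row_(j < k) s j) *m diag_mx (\row_(j < k) s j))
  = \matrix_(i < k, j < k) ((A *m B^T) i j / (s j * s j)).
Proof.
move=> hs; have hU := @sig_unit _ _ _ hs.
pose M := \matrix_(i < k, j < k) ((A *m B^T) i j / (s j * s j)); rewrite -/M.
have hM : M *m (diag_mx (\row_(j < k) s j) *m diag_mx (\row_(j < k) s j)) = A *m B^T.
  rewrite mulmx_diag mul_mx_diag; apply/matrixP => i j; rewrite !mxE divfK //.
  by rewrite mulf_neq0 // hs.
by rewrite -hM mulmxK.
Qed.

Lemma gen_sol (R : realFieldType) (N ns k : nat)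
    (X Xt : 'M[R]_(N, ns)) (W : 'M[R]_N) (s : nat -> R) (V : 'M[R]_ns)
    (f : 'I_k -> 'I_N) (hf : forall i, val (f i) = val i) (hk : (k <= ns)%N) :
  is_svd X W s V -> (forall j, (j < k)%N -> s j != 0) ->
  opinf_unique_solution (colsub f W) X Xt
    ((colsub f W)^T *m Xt *m ((colsub f W)^T *m X)^T *m
      invmx (diag_mx (\row_(j < k) s j) *m diag_mx (\row_(j < k) s j))).
Proof.
move=> hsvd hs.
have [h1 h2] := @ls_unique _ _ _ ((colsub f W)^T *m Xt) _ _
   (@gram _ _ _ _ X W s V f hf hk hsvd) (@sig_unit _ _ _ hs).
by split; [exact: h1 | exact: h2].
Qed.

Theorem proposition1 (R : realFieldType) (N ns n : nat)
    (X Xt : 'M[R]_(N, ns)) (W : 'M[R]_N) (s : nat -> R) (V : 'M[R]_ns)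
    (hn : (n <= minn N ns)%N) :
  is_svd X W s V ->
  (forall j, (j < n)%N -> s j != 0) ->
  let U : 'M[R]_(N, n) :=
    colsub (widen_ord (leq_trans hn (geq_minl N ns))) W in
  let Sigma : 'M[R]_n := diag_mx (\row_(j < n) s j) in
  let Xh := U^T *m X in
  let Xht := U^T *m Xt in
  let Dh := Xht *m Xh^T *m invmx (Sigma *m Sigma) in
  opinf_unique_solution U X Xt Dh /\
  (forall (n' : nat) (hn' : (n' < n)%N),
     let U' : 'M[R]_(N, n') := colsub (widen_ord (ltnW hn')) U in
     let Dh' : 'M[R]_n' := mxsub (widen_ord (ltnW hn')) (widen_ord (ltnW hn')) Dh in
     opinf_unique_solution U' X Xt Dh').
Proof.
move=> hsvd hs U Sigma Xh Xht Dh.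
have hk : (n <= ns)%N by apply: leq_trans hn (geq_minr N ns).
split; first (apply: gen_sol; [by [] | exact: hk | exact: hsvd | exact: hs]).
move=> n' hn' U' Dh'.
have hs' : forall j, (j < n')%N -> s j != 0.
  by move=> j hj; apply: hs; apply: ltn_trans hj hn'.
have hk' : (n' <= ns)%N by apply: leq_trans (ltnW hn') hk.
set f := widen_ord (leq_trans hn (geq_minl N ns)).
set g := widen_ord (ltnW hn').
have eU : U' = colsub (f \o g) W by rewrite colsub_comp.
have hfg : forall i, val ((f \o g) i) = val i by [].
have := @gen_sol _ _ _ _ X Xt W s V _ hfg hk' hsvd hs'.
rewrite -eU; congr opinf_unique_solution.
rewrite /Dh' /Dh /Xht /Xh /Sigma !dform // eU.
apply/matrixP => i j; rewrite !mxE /=.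
congr (_ / _); apply: eq_bigr => l _; rewrite !mxE; congr (_ * _);
  apply: eq_bigr => a _; rewrite !mxE //.
Qed.
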